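(* Let $p$ be a prime number and let $c,r$ be positive integers. Let $G$ be a finite $p$-group of nilpotency class $c$ and rank $r$. Then there exists a series of subgroups \[G=G_0\supseteq G_1\supseteq \dots\supseteq G_h=\{1\}\] such that: (a) each $G_i$ is normal in $G$ and each $G_i/G_{i+1}$ is a cyclic $p$-group; (b) if $G/G_{i+1}$ has nilpotency class $l$, then $G_i\leq \gamma_l(G)$, and in particular $G_i/G_{i+1}$ is central in $G/G_{i+1}$; (c) $h=h(c,r)\leq cr$ is a number depending only on $c$ and $r$.
   Context: The rank of a finite $p$-group $G$ is its sectional rank $\operatorname{rk}(G)=\max\{d(H)\mid H\leq G\}$, where $d(H)$ is the minimal number of generators of $H$. $\{\gamma_i(G)\}_{i\geq1}$ denotes the lower central series, $\gamma_1(G)=G$, $\gamma_{i+1}(G)=[\gamma_i(G),G]$. *)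

(* Defs.v *)
From mathcomp Require Import all_boot all_fingroup all_solvable.
Set Implicit Arguments.
Unset Strict Implicit.
Unset Printing Implicit Defensive.
Local Open Scope group_scope.

(* d(H): minimal number of generators of H, i.e. the least #|X| with <<X>> = H.
   H itself generates H, so #|H| is a valid default/upper bound. *)
Definition min_gen (gT : finGroupType) (H : {set gT}) : nat :=
  \big[minn/#|H|]_(X : {set gT} | <<X>> == H) #|X|.

Definition sec_rank (gT : finGroupType) (G : {set gT}) : nat :=
  \max_(H : {group gT} | H \subset G) min_gen H.

(* Main.v *)
Require Import Defs.
From mathcomp Require Import all_boot all_fingroup all_solvable.
From mathcomp Require Import zify.
Local Open Scope group_scope.
Set Implicit Arguments.
Unset Strict Implicit.

Lemma min_gen_ex (gT : finGroupType) (H : {group gT}) :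
  exists X : {set gT}, <<X>> = H /\ #|X| = min_gen H.
Proof.
rewrite /min_gen; apply: (big_ind (fun m => exists X : {set gT}, <<X>> = H /\ #|X| = m)).
- by exists H; rewrite genGid.
- move=> a b [X [h1 h2]] [Y [h3 h4]]; case: (leqP a b) => ab.
    by exists X.
  by exists Y.
- by move=> X /eqP hX; exists X.
Qed.

Lemma gen_ex (gT : finGroupType) (G H : {group gT}) :
  H \subset G -> exists X : {set gT}, <<X>> = H /\ #|X| <= sec_rank G.
Proof.
move=> sHG; have [X [h1 h2]] := min_gen_ex H; exists X; split => //.
rewrite h2 /sec_rank.
exact: (@leq_bigmax_cond _ (fun K : {group gT} => K \subset G) (fun K : {group gT} => min_gen K) H sHG).
Qed.

Lemma divmod_step i r : 0 < r -> (i %% r).+1 < r ->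
  i.+1 %/ r = i %/ r /\ i.+1 %% r = (i %% r).+1.
Proof.
move=> r0 h; rewrite {1 3}(divn_eq i r) -addnS divnMDl // modnMDl; split => //.
by rewrite (divn_small h) addn0.
by rewrite (modn_small h).
Qed.

Lemma divmod_step2 i r : 0 < r -> (i %% r).+1 = r ->
  i.+1 %/ r = (i %/ r).+1 /\ i.+1 %% r = 0.
Proof.
move=> r0 h; rewrite {1 3}(divn_eq i r) -addnS h -mulSnr mulnK // modnMl; split => //.
Qed.

Lemma normal_between (gT : finGroupType) (G H : {group gT}) j :
  'L_j.+2(G) \subset H -> H \subset 'L_j.+1(G) -> H <| G.
Proof.
move=> sAH sHB.
have sHG : H \subset G by apply: subset_trans sHB _; exact: lcn_sub.
rewrite /normal sHG -commg_subl.
apply: subset_trans sAH; rewrite lcnSn; exact: commSg.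
Qed.

Lemma step (gT : finGroupType) (G : {group gT}) (p j : nat) (t s : seq gT) :
  p.-group G -> <<[set x in s]>> = 'L_j.+1(G) -> {subset t <= s} ->
  let H1 := <<'L_j.+2(G) :|: [set x in t]>>%G in
  let H2 := <<'L_j.+2(G) :|: [set x in behead t]>>%G in
  [/\ H2 \subset H1, H1 <| G, cyclic (H1 / H2), p.-group (H1 / H2) &
    (forall l : nat, nil_class (G / H2) = l -> H1 \subset 'L_l(G)) /\
    (H1 / H2 \subset 'Z(G / H2))].
Proof.
move=> pG defB sts H1 H2.
have sAB : 'L_j.+2(G) \subset 'L_j.+1(G) by exact: lcn_subS.
have sBG : 'L_j.+1(G) \subset G by exact: lcn_sub.
have sbt : {subset behead t <= t} by case: (t) => //= x t' y; rewrite inE => ->; rewrite orbT.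
have sub_tB : forall u : seq gT, {subset u <= s} -> <<'L_j.+2(G) :|: [set x in u]>> \subset 'L_j.+1(G).
  move=> u su; rewrite gen_subG subUset sAB /=; apply/subsetP => x; rewrite inE => /su xs.
  by rewrite -defB; apply: mem_gen; rewrite inE.
have sAH : forall u : seq gT, 'L_j.+2(G) \subset <<'L_j.+2(G) :|: [set x in u]>>.
  by move=> u; exact: subset_trans (subsetUl _ [set x in u]) (sub_gen _).
have sH1B : H1 \subset 'L_j.+1(G) := sub_tB t sts.
have sH2B : H2 \subset 'L_j.+1(G) by apply: (sub_tB (behead t)) => x /sbt /sts.
have nH1 : H1 <| G by exact: (@normal_between _ G H1 j (sAH t) sH1B).
have nH2 : H2 <| G by exact: (@normal_between _ G H2 j (sAH _) sH2B).
have sH1G : H1 \subset G := subset_trans sH1B sBG.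
have sH21 : H2 \subset H1.
  rewrite /H1 /H2 /=; apply: genS; apply: setUS; apply/subsetP=> x; rewrite !inE; exact: sbt.
have comm1 : [~: H1, G] \subset H2.
  apply: subset_trans (sAH _); rewrite lcnSn; exact: commSg.
split=> //.
- case Et: t => [|x t'].
    have -> : H1 = H2 by apply: val_inj; rewrite /H1 /H2 /= Et.
    by rewrite trivg_quotient cyclic1.
  have xG : x \in G by apply: (subsetP sBG); rewrite -defB; apply: mem_gen; rewrite inE; apply: sts; rewrite Et inE eqxx.
  have nxH2 : <[x]> \subset 'N(H2) by rewrite cycle_subG; apply: (subsetP (normal_norm nH2)).
  apply: (@cyclicS _ ((H2 <*> <[x]>) / H2)%G).
    apply: quotientS; rewrite /H1 gen_subG subUset; apply/andP; split.
      apply: subset_trans (joing_subl _ _); exact: sAH.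
    apply/subsetP=> y; rewrite Et !inE => /orP[/eqP->|yt].
      by apply: (subsetP (joing_subr _ _)); exact: cycle_id.
    by apply: (subsetP (joing_subl _ _)); apply: mem_gen; rewrite Et !inE yt orbT.
  by rewrite /= quotientYidl // quotient_cyclic // cycle_cyclic.
- by apply: quotient_pgroup; apply: pgroupS pG.
- split.
    move=> l <-.
    have nilQ : nilpotent (G / H2) by apply: quotient_nil; exact: pgroup_nil pG.
    have : nil_class (G / H2) <= j.+1.
      apply/(lcn_nil_classP j.+1 nilQ).
      rewrite /= -morphim_lcn ?normal_norm //.
      exact: quotientS1 (sAH _).
    move=> le; apply: subset_trans sH1B _; exact: lcn_sub_leq.
  rewrite /center subsetI quotientS //=.
  exact: quotient_cents2r.
Qed.

Theorem lemma3p1 :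
  exists h : nat -> nat -> nat,
    (forall c r : nat, (0 < c)%N -> (0 < r)%N -> (h c r <= c * r)%N) /\
    forall (p c r : nat) (gT : finGroupType) (G : {group gT}),
      prime p -> (0 < c)%N -> (0 < r)%N ->
      p.-group G -> nil_class G = c -> sec_rank G = r ->
      exists Gs : nat -> {group gT},
        [/\ Gs 0%N = G, Gs (h c r) = 1%G :> {group gT} &
          forall i : nat, (i < h c r)%N ->
            [/\ Gs i.+1 \subset Gs i,
                Gs i <| G,
                cyclic (Gs i / Gs i.+1),
                p.-group (Gs i / Gs i.+1) &
                (forall l : nat, nil_class (G / Gs i.+1) = l -> Gs i \subset 'L_l(G)) /\
                (Gs i / Gs i.+1 \subset 'Z(G / Gs i.+1))]].
Proof.
exists (fun c r => c * r)%N; split => // p c r gT G pr c0 r0 pG cG rG.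
pose X j := odflt set0 [pick X : {set gT} | (<<X>> == 'L_j.+1(G)) && (#|X| <= r)%N].
have hX : forall j, <<X j>> = 'L_j.+1(G) /\ (#|X j| <= r)%N.
  move=> j; rewrite /X; case: pickP => [Y /andP[/eqP h1 h2] | none] //=.
  have [Y [h1 h2]] := gen_ex (lcn_sub j.+1 G).
  by move: (none Y); rewrite rG in h2; rewrite h1 eqxx h2.
pose S j := enum (X j).
have setS : forall j, [set x in S j] = X j by move=> j; exact: set_enum.
have sizeS : forall j, (size (S j) <= r)%N by move=> j; rewrite /S -cardE; case: (hX j).
pose G' j k := (<<'L_j.+2(G) :|: [set x in drop k (S j)]>>)%G.
have G'r : forall j k, (r <= k)%N -> G' j k = ('L_j.+2(G))%G.
  move=> j k rk; apply: val_inj; rewrite /= drop_oversize; last exact: leq_trans (sizeS j) rk.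
  have -> : [set x in [::] : seq gT] = set0 by apply/setP => x; rewrite !inE.
  by rewrite setU0 genGid.
have G'0 : forall j, G' j 0%N = ('L_j.+1(G))%G.
  move=> j; apply: val_inj; rewrite /= drop0 setS; apply/eqP; rewrite eqEsubset; apply/andP; split.
    rewrite gen_subG subUset lcn_subS /=; case: (hX j) => <- _; exact: sub_gen.
  case: (hX j) => {1}<- _; exact: genS (subsetUr _ _).
exists (fun i => G' (i %/ r) (i %% r)); split.
- by rewrite div0n mod0n G'0; apply: val_inj; rewrite /= lcn1.
- rewrite mulnK // modnMl G'0; apply: val_inj => /=.
  apply/(lcn_nil_classP c (pgroup_nil pG)); by rewrite cG.
move=> i _.
have hi1 : G' (i.+1 %/ r) (i.+1 %% r) = G' (i %/ r) (i %% r).+1.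
  have : ((i %% r).+1 <= r)%N by rewrite ltn_mod.
  rewrite leq_eqVlt => /orP[/eqP e | lt].
    have [-> ->] := divmod_step2 r0 e.
    by rewrite G'0 G'r // e.
  by have [-> ->] := divmod_step r0 lt.
rewrite hi1.
have sts : {subset drop (i %% r) (S (i %/ r)) <= S (i %/ r)} by move=> x; exact: mem_drop.
have := step (j := i %/ r) pG _ sts.
rewrite setS (proj1 (hX _)) => /(_ erefl).
have -> : behead (drop (i %% r) (S (i %/ r))) = drop (i %% r).+1 (S (i %/ r)).
  by rewrite -drop1 drop_drop add1n.
by [].
Qed.
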